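(* Let $\mu,\varepsilon,\nu,\Omega,\omega$ be real or complex parameters with $\mu\neq 0$ and $\nu\notin\{0,-1,-2,\dots\}$, and consider the grand confluent hypergeometric (GCH) equation $$x\,y''(x)+\left(\mu x^2+\varepsilon x+\nu\right)y'(x)+\left(\Omega x+\varepsilon\omega\right)y(x)=0 .$$ Put $\gamma=\tfrac12(1+\nu)$, $a=\frac{\Omega}{2\mu}$, $\tilde\varepsilon=-\tfrac12\varepsilon x$ and $z=-\tfrac12\mu x^2$, and assume $\gamma-a$ is not a nonpositive integer. Then the function $$ \begin{aligned} y(x)=QW\Big(\omega,\gamma;\tilde\varepsilon;z\Big)=\frac{\Gamma(\gamma-a)}{\Gamma(\gamma)}\Bigg\{&\sum_{i_0=0}^{\infty}\frac{(a)_{i_0}}{(1)_{i_0}(\gamma)_{i_0}}z^{i_0}\\ &+\Bigg\{\sum_{i_0=0}^{\infty}\frac{(i_0+\frac{\omega}{2})}{(i_0+\frac12)(i_0-\frac12+\gamma)}\frac{(a)_{i_0}}{(1)_{i_0}(\gamma)_{i_0}}\sum_{i_1=i_0}^{\infty}\frac{(a+\frac12)_{i_1}(\frac32)_{i_0}(\gamma+\frac12)_{i_0}}{(a+\frac12)_{i_0}(\frac32)_{i_1}(\gamma+\frac12)_{i_1}}z^{i_1}\Bigg\}\tilde\varepsilon\\ &+\sum_{n=2}^{\infty}\Bigg\{\sum_{i_0=0}^{\infty}\frac{(i_0+\frac{\omega}{2})}{(i_0+\frac12)(i_0-\frac12+\gamma)}\frac{(a)_{i_0}}{(1)_{i_0}(\gamma)_{i_0}}\\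 &\quad\times\prod_{k=1}^{n-1}\Bigg\{\sum_{i_k=i_{k-1}}^{\infty}\frac{(i_k+\frac{\omega}{2}+\frac{k}{2})}{(i_k+\frac12+\frac k2)(i_k-\frac12+\gamma+\frac k2)}\frac{(a+\frac k2)_{i_k}(1+\frac k2)_{i_{k-1}}(\frac k2+\gamma)_{i_{k-1}}}{(a+\frac k2)_{i_{k-1}}(1+\frac k2)_{i_k}(\frac k2+\gamma)_{i_k}}\Bigg\}\\ &\quad\times\sum_{i_n=i_{n-1}}^{\infty}\frac{(a+\frac n2)_{i_n}(1+\frac n2)_{i_{n-1}}(\frac n2+\gamma)_{i_{n-1}}}{(a+\frac n2)_{i_{n-1}}(1+\frac n2)_{i_n}(\frac n2+\gamma)_{i_n}}z^{i_n}\Bigg\}\tilde\varepsilon^{\,n}\Bigg\} \end{aligned} $$ is the power series expansion about $x=0$ of a solution (the solution of the first kind, corresponding to the indicial root $\lambda=0$) of the GCH equation.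
   Context: $(x)_n=\Gamma(x+n)/\Gamma(x)$ denotes the Pochhammer symbol (rising factorial), and for integers $m\ge n\ge 0$ a quotient $(b)_m/(b)_n$ is understood as $\prod_{j=n}^{m-1}(b+j)$. In the term with index $n\ge 2$, the product over $k=1,\dots,n-1$ denotes nested summation: the sum over $i_k$ runs from $i_{k-1}$ to $\infty$, with $i_{k-1}$ the summation index of the previous level, and the innermost sum over $i_n$ runs from $i_{n-1}$ to $\infty$. *)

(* Defs.v *)
From Stdlib Require Import Reals Factorial ClassicalEpsilon.
From Coquelicot Require Import Coquelicot.
Open Scope C_scope.

Definition natC (n : nat) : C := RtoC (INR n).

Fixpoint prod_from (f : nat -> C) (p n : nat) : C :=
  match n with
  | O => 1
  | S n' => f p * prod_from f (S p) n'
  end.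

Definition poch (x : C) (n : nat) : C := prod_from (fun j => x + natC j) 0 n.

(* For p <= q, quotient (x)_q / (x)_p understood as prod_{j=p}^{q-1} (x+j) *)
Definition poch_quot (x : C) (q p : nat) : C :=
  prod_from (fun j => x + natC j) p (q - p)%nat.

Definition cpow_pos (t : R) (s : C) : C :=
  (exp (Re s * ln t) * cos (Im s * ln t), exp (Re s * ln t) * sin (Im s * ln t))%R.

(* Euler's Gamma function on C (Gauss' product formula):
   Gamma(s) = lim_{n -> oo} n! n^s / (s (s+1) ... (s+n)),
   for s not a nonpositive integer. *)
Definition Gauss_seq (s : C) (n : nat) : C :=
  natC (fact n) * cpow_pos (INR n) s / poch s (S n).

Definition CGamma (s : C) : C :=
  epsilon (inhabits (RtoC 0))
    (fun L => filterlim (Gauss_seq s) eventually (locally L)).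

Section QW.
Variables (omega gam a : C).

Definition half (k : nat) : C := natC k / 2.

Definition A0 (i : nat) : C :=
  (natC i + omega / 2) / ((natC i + / 2) * (natC i - / 2 + gam))
  * (poch a i / (poch 1 i * poch gam i)).

Definition B0 (i : nat) : C := poch a i / (poch 1 i * poch gam i).

Definition Wk (k i : nat) : C :=
  (natC i + omega / 2 + half k)
  / ((natC i + / 2 + half k) * (natC i - / 2 + gam + half k)).

Definition Rk (k p q : nat) : C :=
  poch_quot (a + half k) q p
  / (poch_quot (1 + half k) q p * poch_quot (half k + gam) q p).

(* Nested summation: F n i = sum over 0 <= i_0 <= i_1 <= ... <= i_{n-1} = i of
   A0 i_0 * prod_{k=1}^{n-1} ( Wk k i_k * Rk k i_{k-1} i_k )   (n >= 1). *)
Fixpoint F (n : nat) (i : nat) : C :=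
  match n with
  | O => 0
  | S O => A0 i
  | S (S _ as n') => sum_n (fun p => F n' p * Rk n' p i) i * Wk n' i
  end.

(* coefficient of z^j in the coefficient of eps~^n:
   n = 0 : B0 j ;  n >= 1 : sum_{i_{n-1} <= j} F n i_{n-1} * Rk n i_{n-1} j *)
Definition d (n j : nat) : C :=
  match n with
  | O => B0 j
  | S _ => sum_n (fun p => F n p * Rk n p j) j
  end.

End QW.

(* The bracketed double series  sum_n sum_j d n j z^j eps~^n  with
   eps~ = -eps x / 2 and z = - mu x^2 / 2, collected as a power series in x:
   the coefficient of x^m gathers the (finitely many) terms with n + 2 j = m. *)
Definition QWcoef (omega gam a eps mu : C) (m : nat) : C :=
  sum_n (fun n =>
     if Nat.even (m - n)%nat then
       d omega gam a n (Nat.div2 (m - n)%nat)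
       * pow_n (- eps / 2) n * pow_n (- mu / 2) (Nat.div2 (m - n)%nat)
     else RtoC 0) m.

Definition nonpos_int (s : C) : Prop := exists k : nat, s = - natC k.

(* Main.v *)
Require Import Defs.
From Stdlib Require Import Reals Lra Lia ClassicalEpsilon.
From Coquelicot Require Import Coquelicot.
Open Scope C_scope.

Lemma natC_0 : natC 0 = 0.
Proof. unfold natC. simpl. reflexivity. Qed.
Lemma natC_S n : natC (S n) = natC n + 1.
Proof. unfold natC. rewrite S_INR. rewrite RtoC_plus. reflexivity. Qed.
Lemma natC_plus m n : natC (m + n) = natC m + natC n.
Proof. unfold natC. rewrite plus_INR. rewrite RtoC_plus. reflexivity. Qed.

Lemma Cinv_0 : / (0:C) = 0.
Proof. unfold Cinv. simpl. unfold Rdiv. rewrite !Rmult_0_l. rewrite Ropp_0, Rmult_0_l. reflexivity. Qed.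

Lemma Cinv_mult_all (x y : C) : / (x * y) = / x * / y.
Proof.
  destruct (Ceq_dec x 0) as [->|Hx].
  { rewrite Cmult_0_l, Cinv_0. ring. }
  destruct (Ceq_dec y 0) as [->|Hy].
  { rewrite Cmult_0_r, Cinv_0. ring. }
  field. auto.
Qed.

Lemma prod_from_last f p n : prod_from f p (S n) = prod_from f p n * f (p + n)%nat.
Proof.
  revert p; induction n; intros p; simpl.
  - rewrite Nat.add_0_r. ring.
  - simpl in IHn. rewrite IHn. replace (S p + n)%nat with (p + S n)%nat by lia. ring.
Qed.

Lemma poch_S x n : poch x (S n) = poch x n * (x + natC n).
Proof. unfold poch. rewrite prod_from_last. reflexivity. Qed.

Lemma poch_quot_S x q p : (p <= q)%nat ->
  poch_quot x (S q) p = poch_quot x q p * (x + natC q).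
Proof.
  intros H. unfold poch_quot. replace (S q - p)%nat with (S (q - p)) by lia.
  rewrite prod_from_last. replace (p + (q - p))%nat with q by lia. reflexivity.
Qed.

Lemma poch_quot_refl x p : poch_quot x p p = 1.
Proof. unfold poch_quot. rewrite Nat.sub_diag. reflexivity. Qed.

Lemma natC_mul2 j : natC (2 * j) = 2 * natC j.
Proof. unfold natC. rewrite mult_INR. rewrite RtoC_mult. reflexivity. Qed.

Lemma natC_S_neq0 k : natC (S k) <> 0.
Proof.
  unfold natC. intros H. apply RtoC_inj in H. pose proof (pos_INR k). rewrite S_INR in H. lra.
Qed.

Lemma C2_neq0 : (2:C) <> 0.
Proof. intros E. apply (f_equal fst) in E. simpl in E. lra. Qed.

Lemma div2_neq0 (x:C) : x <> 0 -> x / 2 <> 0.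
Proof. intros H H2. assert (E : x = x / 2 * 2) by field. rewrite H2 in E. apply H. rewrite E. ring. Qed.

Lemma sum_SnC (f : nat -> C) n : sum_n f (S n) = sum_n f n + f (S n).
Proof. rewrite sum_Sn. reflexivity. Qed.
Lemma sum_mult_rC (f : nat -> C) c n : sum_n (fun k => f k * c) n = sum_n f n * c.
Proof. apply (sum_n_mult_r c f n). Qed.
Lemma sum_plusC (f g : nat -> C) n : sum_n (fun k => f k + g k) n = sum_n f n + sum_n g n.
Proof. apply (sum_n_plus f g n). Qed.
Lemma sum_mult_lC (f : nat -> C) c n : sum_n (fun k => c * f k) n = c * sum_n f n.
Proof. apply (sum_n_mult_l c f n). Qed.
Lemma sum_OC (f : nat -> C) : sum_n f 0 = f 0%nat.
Proof. apply sum_O. Qed.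
Lemma sum_SlC (f : nat -> C) n : sum_n f (S n) = f 0%nat + sum_n (fun k => f (S k)) n.
Proof. unfold sum_n. rewrite sum_Sn_m by lia. rewrite <- sum_n_m_S. reflexivity. Qed.

Lemma neq0_scale (X Y c : C) : c <> 0 -> Y <> 0 -> X * c = Y -> X <> 0.
Proof. intros Hc HY E HX. apply HY. rewrite <- E, HX. ring. Qed.

Lemma C1_neq0 : (1:C) <> 0.
Proof. intros E. apply (f_equal fst) in E. simpl in E. lra. Qed.

Ltac natC_norm := repeat first [rewrite natC_plus | rewrite natC_mul2 | rewrite natC_S | rewrite natC_0].

Ltac nz_pos k := cbv beta; match goal with |- not (@eq C ?X _) =>
  apply (neq0_scale X (natC (S k)) 1 C1_neq0 (natC_S_neq0 k));
  natC_norm; ring end.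

Section Alg.
Variables omega gam a : C.
Hypothesis Hg : forall k, natC k + 2 * gam - 1 <> 0.

Ltac nz_gc k c Hc := cbv beta; match goal with |- not (@eq C ?X _) =>
  apply (neq0_scale X _ c Hc (Hg k));
  natC_norm; ring end.
Ltac nz_g k := cbv beta; match goal with |- not (@eq C ?X _) =>
  apply (neq0_scale X _ 1 C1_neq0 (Hg k));
  natC_norm; ring end.

Lemma Rk_refl k p : Rk gam a k p p = 1.
Proof. unfold Rk. rewrite !poch_quot_refl. field. Qed.

Lemma Rk_S k p q : (p <= q)%nat -> Rk gam a k p (S q) = Rk gam a k p q *
  ((a + half k + natC q) / ((1 + half k + natC q) * (half k + gam + natC q))).
Proof.
  intros H. unfold Rk. rewrite !poch_quot_S by exact H.
  unfold Cdiv. rewrite !Cinv_mult_all. ring.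
Qed.

Lemma B0_S j : B0 gam a (S j) = B0 gam a j * ((a + natC j) / ((1 + natC j) * (gam + natC j))).
Proof.
  unfold B0. rewrite !poch_S. unfold Cdiv. rewrite !Cinv_mult_all. ring.
Qed.

Lemma F_S n j : F omega gam a (S n) j = Wk omega gam n j * d omega gam a n j.
Proof.
  destruct n as [|n].
  - simpl. assert (H0 : half 0 = 0) by (unfold half; rewrite natC_0; unfold Cdiv; ring).
    unfold A0, Wk, B0. rewrite H0, !Cplus_0_r. unfold Cdiv. rewrite !Cinv_mult_all. ring.
  - change (F omega gam a (S (S n)) j) with
      (sum_n (fun p => F omega gam a (S n) p * Rk gam a (S n) p j) j * Wk omega gam (S n) j).
    simpl. ring.
Qed.

Lemma d_S n j : d omega gam a (S n) (S j) =
  (a + half (S n) + natC j) / ((1 + half (S n) + natC j) * (half (S n) + gam + natC j))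
    * d omega gam a (S n) j + F omega gam a (S n) (S j).
Proof.
  unfold d. rewrite sum_SnC. rewrite Rk_refl.
  rewrite (sum_n_ext_loc _ (fun p => (F omega gam a (S n) p * Rk gam a (S n) p j) *
     ((a + half (S n) + natC j) / ((1 + half (S n) + natC j) * (half (S n) + gam + natC j))))).
  2:{ intros p Hp. rewrite Rk_S by exact Hp. apply Cmult_assoc. }
  rewrite sum_mult_rC. ring.
Qed.

Lemma D_id n j :
  natC (n + 2 * j) * (natC (n + 2 * j) - 2 + 2 * gam) * d omega gam a n j =
  2 * (natC (n + 2 * j) - 1 + omega) * (match n with O => 0 | S n' => d omega gam a n' j end)
  + 2 * (natC (n + 2 * j) - 2 + 2 * a) * (match j with O => 0 | S j' => d omega gam a n j' end).
Proof.
  destruct n as [|n]; destruct j as [|j].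
  - simpl. rewrite natC_0. ring.
  - unfold d. rewrite B0_S. natC_norm. unfold Cminus. field.
    split; [nz_gc (2 * j + 1)%nat 2 C2_neq0 | nz_pos j].
  - assert (E : d omega gam a (S n) 0 = F omega gam a (S n) 0).
    { unfold d. rewrite sum_OC, Rk_refl. ring. }
    rewrite E, F_S. unfold Wk, half. natC_norm. field. split; [nz_g n | nz_pos n].
  - rewrite d_S, F_S. unfold Wk, half.
    rewrite !natC_plus, !natC_mul2, !natC_S.
    field. split; [nz_g (n + 2 * S j)%nat | nz_pos (n + 2 * S j)%nat].
Qed.
End Alg.

Definition cc (g : nat -> nat -> C) (m : nat) : C :=
  sum_n (fun n => if Nat.even (m - n) then g n (Nat.div2 (m - n)) else RtoC 0) m.

Lemma even_div2 x : Nat.even x = true -> x = (2 * Nat.div2 x)%nat.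
Proof.
  intros H. rewrite (Nat.div2_odd x) at 1. rewrite <- Nat.negb_even, H. simpl. lia.
Qed.

Lemma rec_sum (g : nat -> nat -> C) (A B D : C) m :
  (forall n j, (n + 2 * j)%nat = S m ->
     A * g n j = B * (match n with O => RtoC 0 | S n' => g n' j end)
               + D * (match j with O => RtoC 0 | S j' => g n j' end)) ->
  A * cc g (S m) = B * cc g m + D * (match m with O => RtoC 0 | S m' => cc g m' end).
Proof.
  intros Hg. unfold cc at 1. rewrite <- sum_mult_lC.
  rewrite (sum_n_ext_loc _ (fun n =>
     B * (if Nat.even (S m - n) then (match n with O => RtoC 0 | S n' => g n' (Nat.div2 (S m - n)) end) else RtoC 0)
   + D * (if Nat.even (S m - n) then (match Nat.div2 (S m - n) with O => RtoC 0 | S j' => g n j' end) else RtoC 0))).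
  2:{ intros n Hn. destruct (Nat.even (S m - n)) eqn:He.
      - apply Hg. pose proof (even_div2 _ He). lia.
      - simpl. ring. }
  rewrite sum_plusC, sum_mult_lC, sum_mult_lC. f_equal; [f_equal|].
  - rewrite sum_SlC. simpl (match 0%nat with O => _ | S _ => _ end).
    unfold cc. replace (if Nat.even (S m - 0) then RtoC 0 else RtoC 0) with (RtoC 0) by (destruct (Nat.even _); reflexivity).
    rewrite Cplus_0_l. apply sum_n_ext. intros k. reflexivity.
  - f_equal. destruct m as [|m].
    + simpl. rewrite sum_SnC, sum_OC. simpl. ring.
    + rewrite !sum_SnC.
      unfold cc.
      rewrite (sum_n_ext_loc _ (fun n => if Nat.even (m - n) then g n (Nat.div2 (m - n)) else RtoC 0)).
      2:{ intros k Hk. replace (S (S m) - k)%nat with (S (S (m - k))) by lia.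
          simpl Nat.even. simpl Nat.div2. destruct (Nat.even (m - k)); reflexivity. }
      replace (S (S m) - S m)%nat with 1%nat by lia. rewrite Nat.sub_diag. simpl.
      rewrite ?Cplus_0_r. reflexivity.
Qed.

Lemma pow_n_SC (x : C) n : pow_n x (S n) = x * pow_n x n.
Proof. reflexivity. Qed.

Lemma QW_cc omega gam a eps mu m : QWcoef omega gam a eps mu m =
  cc (fun n j => d omega gam a n j * pow_n (- eps / 2) n * pow_n (- mu / 2) j) m.
Proof. reflexivity. Qed.

Lemma QW_rec omega gam a eps mu nu Omega m
  (Hg : forall k, natC k + 2 * gam - 1 <> 0) (Hnu : nu = 2 * gam - 1) (HO : Omega = 2 * mu * a) :
  natC (S m) * (natC m + nu) * QWcoef omega gam a eps mu (S m)
  + eps * (natC m + omega) * QWcoef omega gam a eps mu m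
  + (match m with O => 0 | S m' => (mu * natC m' + Omega) * QWcoef omega gam a eps mu m' end) = 0.
Proof.
  set (g := fun n j => d omega gam a n j * pow_n (- eps / 2) n * pow_n (- mu / 2) j).
  pose proof (rec_sum g (natC (S m) * (natC (S m) - 2 + 2 * gam))
    (2 * (natC (S m) - 1 + omega) * (- eps / 2)) (2 * (natC (S m) - 2 + 2 * a) * (- mu / 2)) m) as H.
  rewrite !QW_cc. fold g.
  assert (H' : natC (S m) * (natC (S m) - 2 + 2 * gam) * cc g (S m) =
     2 * (natC (S m) - 1 + omega) * (- eps / 2) * cc g m +
     2 * (natC (S m) - 2 + 2 * a) * (- mu / 2) * match m with O => RtoC 0 | S m' => cc g m' end).
  { apply H. intros n j Hnj. rewrite <- Hnj. pose proof (D_id omega gam a Hg n j) as Hd.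
    unfold g.
    transitivity (natC (n + 2 * j) * (natC (n + 2 * j) - 2 + 2 * gam) * d omega gam a n j
       * pow_n (- eps / 2) n * pow_n (- mu / 2) j); [ring|].
    rewrite Hd. destruct n as [|n]; destruct j as [|j]; rewrite ?pow_n_SC; ring. }
  transitivity (natC (S m) * (natC (S m) - 2 + 2 * gam) * cc g (S m) -
     (2 * (natC (S m) - 1 + omega) * (- eps / 2) * cc g m +
     2 * (natC (S m) - 2 + 2 * a) * (- mu / 2) * match m with O => RtoC 0 | S m' => cc g m' end)).
  2:{ rewrite H'. ring. }
  subst nu Omega. destruct m as [|m]; rewrite ?natC_S, ?natC_0; rewrite ?QW_cc; fold g; field.
Qed.

Lemma Cmod_natC m : Cmod (natC m) = INR m.
Proof. unfold natC. rewrite Cmod_R. apply Rabs_pos_eq, pos_INR. Qed.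

Lemma Cmod_pow_n (x : C) m : Cmod (pow_n x m) = (Cmod x ^ m)%R.
Proof. induction m; simpl. apply Cmod_1. rewrite Cmod_mult, IHm. reflexivity. Qed.

Lemma series_norm_le (a : nat -> C) (b : nat -> R) l L :
  is_series a l -> is_series b L -> (forall n, Cmod (a n) <= b n)%R -> (Cmod l <= L)%R.
Proof.
  intros Ha Hb Hab.
  assert (H1 : is_lim_seq (fun n => Cmod (sum_n a n)) (Cmod l)).
  { eapply filterlim_comp. exact Ha. exact (filterlim_norm (K:=C_AbsRing) (V:=C_NormedModule) l). }
  assert (H2 : is_lim_seq (sum_n b) L) by exact Hb.
  assert (H3 : forall n, (Cmod (sum_n a n) <= sum_n b n)%R).
  { intros n. eapply Rle_trans. apply (norm_sum_n_m a 0 n).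
    apply sum_n_m_le. intros k. apply Hab. }
  exact (is_lim_seq_le _ _ _ _ H3 H1 H2).
Qed.

Lemma is_series_C0 : is_series (fun _ : nat => RtoC 0) (RtoC 0).
Proof.
  apply (is_series_ext (fun _ => zero)). reflexivity.
  unfold is_series. apply filterlim_ext with (fun _ => zero).
  - intros n. unfold sum_n. rewrite sum_n_m_const_zero. reflexivity.
  - apply filterlim_const.
Qed.

Lemma is_series_C_unique (a : nat -> C) l1 l2 : is_series a l1 -> is_series a l2 -> l1 = l2.
Proof. intros H1 H2. exact (filterlim_locally_unique _ _ _ H1 H2). Qed.

Lemma is_series_shift (a : nat -> C) l : is_series a l ->
  is_series (fun m => match m with O => RtoC 0 | S k => a k end) l.
Proof.
  intros H. apply is_series_decr_1.
  match goal with |- is_series _ ?L => replace L with l end.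
  - apply (is_series_ext a). reflexivity. exact H.
  - change (l = Cplus l (Copp (RtoC 0))). rewrite Copp_0, Cplus_0_r. reflexivity.
Qed.

Lemma is_series_Cmult (c : C) (a : nat -> C) l : is_series a l -> is_series (fun n => c * a n) (c * l).
Proof. intros H. apply (is_series_scal c a l H). Qed.

Lemma is_series_Cplus (a b : nat -> C) la lb : is_series a la -> is_series b lb ->
  is_series (fun n => a n + b n) (la + lb).
Proof. intros H1 H2. apply (is_series_plus a b la lb H1 H2). Qed.

Lemma pow_le1 (r : R) m : (0 <= r <= 1)%R -> (0 <= r ^ m <= 1)%R.
Proof. intros H. split. apply pow_le; lra. replace 1%R with (1 ^ m)%R by apply pow1. apply pow_incr. lra. Qed.

Lemma INR_S_le_2pow m : (INR (S m) <= 2 ^ m)%R.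
Proof. induction m. simpl. lra. rewrite S_INR. rewrite S_INR in IHm. rewrite S_INR. change (2 ^ S m)%R with (2 * 2 ^ m)%R.
  assert (1 <= 2 ^ m)%R by (replace 1%R with (1^m)%R by apply pow1; apply pow_incr; lra). lra. Qed.

Lemma INR_sq_le_3pow m : (INR m ^ 2 <= 3 ^ m)%R.
Proof.
  induction m. simpl. lra.
  pose proof (INR_S_le_2pow m). assert (2 ^ m <= 3 ^ m)%R by (apply pow_incr; lra).
  rewrite S_INR. rewrite S_INR in H. change (3 ^ S m)%R with (3 * 3 ^ m)%R. nra.
Qed.

Lemma ex_geom_C0 (C0 q : R) : (Rabs q < 1)%R -> is_series (fun m => C0 * q ^ m)%R (C0 * / (1 - q))%R.
Proof. intros H. apply (is_series_scal_l C0 _ _ (is_series_geom q H)). Qed.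

Definition PSC (b : nat -> C) (x : C) : C :=
  epsilon (inhabits (RtoC 0)) (fun l => is_series (fun m => b m * pow_n x m) l).

Lemma PSC_conv b C0 (Hb : forall m, (Cmod (b m) <= C0 * (/4) ^ m)%R) x (Hx : (Cmod x <= 1)%R) :
  is_series (fun m => b m * pow_n x m) (PSC b x).
Proof.
  unfold PSC. apply epsilon_spec.
  assert (H : ex_series (K := C_AbsRing) (V := C_CompleteNormedModule) (fun m => b m * pow_n x m)).
  2:{ destruct H as [l Hl]. exists l. exact Hl. }
  apply (ex_series_le _ (fun m => C0 * (/4) ^ m)%R).
  - intros m. change (norm (b m * pow_n x m)) with (Cmod (b m * pow_n x m)).
    rewrite Cmod_mult, Cmod_pow_n. pose proof (pow_le1 (Cmod x) m (conj (Cmod_ge_0 x) Hx)).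
    pose proof (Cmod_ge_0 (b m)). specialize (Hb m). nra.
  - eexists. apply ex_geom_C0. rewrite Rabs_pos_eq; lra.
Qed.

Definition em (x : C) m : C := match m with O => RtoC 0 | S k => natC (S k) * pow_n x k end.

Lemma D_rec (x h : C) (m : nat) : pow_n (x + h) (S m) - pow_n x (S m) - em x (S m) * h =
  (x + h) * (pow_n (x + h) m - pow_n x m - em x m * h) + em x m * h * h.
Proof.
  destruct m as [|m]; unfold em; rewrite ?pow_n_SC; simpl pow_n; natC_norm; ring.
Qed.

Lemma em_bound (x : C) (m : nat) : (Cmod x <= 1)%R -> (Cmod (em x m) <= INR m)%R.
Proof.
  intros H. destruct m as [|m]; simpl em. rewrite Cmod_0. simpl; lra.
  rewrite Cmod_mult, Cmod_natC, Cmod_pow_n.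
  pose proof (pow_le1 (Cmod x) m (conj (Cmod_ge_0 x) H)). pose proof (pos_INR (S m)). nra.
Qed.

Lemma D_bound (x h : C) (m : nat) : (Cmod x + Cmod h <= 1)%R ->
  (Cmod ((pow_n (x + h) m - pow_n x m - em x m * h)%C) <= INR m ^ 2 * Cmod h ^ 2)%R.
Proof.
  intros H. pose proof (Cmod_ge_0 x). pose proof (Cmod_ge_0 h).
  induction m.
  - assert (E : pow_n (x + h) 0 - pow_n x 0 - em x 0 * h = RtoC 0) by (simpl; change (RtoC 1 - RtoC 1 - RtoC 0 * h = RtoC 0); ring). rewrite E, Cmod_0. simpl. lra.
  - rewrite D_rec.
    eapply Rle_trans. apply Cmod_triangle.
    rewrite !Cmod_mult.
    pose proof (em_bound x m ltac:(lra)).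
    assert (Hxh : (Cmod (x + h) <= 1)%R) by (eapply Rle_trans; [apply Cmod_triangle|lra]).
    pose proof (Cmod_ge_0 (x + h)). pose proof (Cmod_ge_0 (em x m)).
    pose proof (Cmod_ge_0 (pow_n (x + h) m - pow_n x m - em x m * h)).
    pose proof (pos_INR m).
    rewrite S_INR.
    assert (Cmod ((x + h)%C) * Cmod ((pow_n (x + h) m - pow_n x m - em x m * h)%C) <= INR m ^ 2 * Cmod h ^ 2)%R by nra.
    assert (Cmod (em x m) * Cmod h * Cmod h <= INR m * Cmod h ^2)%R by nra.
    nra.
Qed.

Lemma PSC_conv_gen b C0 q x : (0 <= q < 1)%R ->
  (forall m, (Cmod (b m) * Cmod x ^ m <= C0 * q ^ m)%R) ->
  is_series (fun m => b m * pow_n x m) (PSC b x).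
Proof.
  intros Hq Hb.
  unfold PSC. apply epsilon_spec.
  assert (H : ex_series (K := C_AbsRing) (V := C_CompleteNormedModule) (fun m => b m * pow_n x m)).
  2:{ destruct H as [l Hl]. exists l. exact Hl. }
  apply (ex_series_le _ (fun m => C0 * q ^ m)%R).
  - intros m. change (norm (b m * pow_n x m)) with (Cmod (b m * pow_n x m)).
    rewrite Cmod_mult, Cmod_pow_n. apply Hb.
  - eexists. apply ex_geom_C0. rewrite Rabs_pos_eq; lra.
Qed.

Lemma sqrt2_lt_2 : (sqrt 2 < 2)%R.
Proof. pose proof (sqrt_sqrt 2 ltac:(lra)). pose proof Rlt_sqrt2_0. nra. Qed.

Lemma PSC_derive b C0 (Hb : forall m, (Cmod (b m) <= C0 * (/4) ^ m)%R) x (Hx : (Cmod x < /2)%R) :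
  @is_derive C_AbsRing C_NormedModule (PSC b) x (PSC (fun m => natC (S m) * b (S m)) x).
Proof.
  set (b' := fun m => natC (S m) * b (S m)).
  assert (HC0 : (0 <= C0)%R) by (specialize (Hb 0%nat); simpl in Hb; pose proof (Cmod_ge_0 (b 0%nat)); lra).
  assert (Hx0 : (0 <= Cmod x)%R) by apply Cmod_ge_0.
  assert (S3 : is_series (fun m => b' m * pow_n x m) (PSC b' x)).
  { apply (PSC_conv_gen _ (C0 / 2) (/4)); [lra|]. intros m. unfold b'.
    rewrite Cmod_mult, Cmod_natC.
    pose proof (Hb (S m)). pose proof (INR_S_le_2pow m). pose proof (pos_INR (S m)).
    assert (Hp : (Cmod x ^ m <= (/2) ^ m)%R) by (apply pow_incr; lra).
    assert (Hp2 : (0 <= Cmod x ^ m)%R) by (apply pow_le; lra).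
    assert (Hq : ((/2) ^ m * 2 ^ m = 1)%R) by (rewrite <- Rpow_mult_distr; replace (/2 * 2)%R with 1%R by field; apply pow1).
    assert (Hq4 : (0 < (/4) ^ m)%R) by (apply pow_lt; lra).
    change ((/4) ^ S m)%R with (/4 * (/4) ^ m)%R in H.
    pose proof (Cmod_ge_0 (b (S m))).
    assert (INR (S m) * Cmod (b (S m)) <= 2 ^ m * (C0 * (/4 * (/4) ^ m)))%R.
    { apply Rmult_le_compat; try lra. }
    assert (INR (S m) * Cmod (b (S m)) * Cmod x ^ m <= 2 ^ m * (C0 * (/4 * (/4) ^ m)) * (/2)^m)%R.
    { apply Rmult_le_compat; try lra. apply Rmult_le_pos; lra. }
    nra. }
  unfold is_derive, filterdiff. split.
  { apply is_linear_scal_l. }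
  intros x0 Hx0'. apply (is_filter_lim_locally_unique (K:=C_AbsRing) (V:=AbsRing_NormedModule C_AbsRing)) in Hx0'. subst x0.
  intros eps.
  set (del := Rmin (/2 - Cmod x) (eps / (4 * C0 + 1))).
  assert (Hdel : (0 < del)%R).
  { unfold del. apply Rmin_glb_lt. lra. apply Rdiv_lt_0_compat. apply cond_pos. lra. }
  exists (mkposreal (del / 2) ltac:(lra)).
  intros y Hy. change (Cmod (y - x) < del / 2)%R in Hy.
  assert (Hh : (Cmod (y - x) < del)%R) by lra.
  change (norm (minus (minus (PSC b y) (PSC b x)) (scal (minus y x) (PSC b' x))) <= eps * norm (minus y x))%R
    with (Cmod (PSC b y - PSC b x - (y - x) * PSC b' x) <= eps * Cmod (y - x))%R.
  set (h := y - x) in *. replace y with (x + h) by (unfold h; ring).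
  assert (Hh1 : (Cmod h <= /2 - Cmod x)%R) by (assert (del <= /2 - Cmod x)%R by (unfold del; apply Rmin_l); lra).
  assert (Hh2 : (Cmod h <= eps / (4 * C0 + 1))%R) by (assert (del <= eps / (4 * C0 + 1))%R by (unfold del; apply Rmin_r); lra).
  assert (Hh0 : (0 <= Cmod h)%R) by apply Cmod_ge_0.
  assert (S1 : is_series (fun m => b m * pow_n (x + h) m) (PSC b (x + h))).
  { apply (PSC_conv _ C0 Hb). eapply Rle_trans. apply Cmod_triangle. lra. }
  assert (S2 : is_series (fun m => b m * pow_n x m) (PSC b x)).
  { apply (PSC_conv _ C0 Hb). lra. }
  apply is_series_shift in S3.
  pose proof (is_series_Cplus _ _ _ _ (is_series_Cplus _ _ _ _ S1 (is_series_Cmult (-1) _ _ S2))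
     (is_series_Cmult (- h) _ _ S3)) as S4.
  assert (S5 : is_series (fun m => b m * (pow_n (x + h) m - pow_n x m - em x m * h))
      (PSC b (x + h) - PSC b x - h * PSC b' x)).
  { replace (PSC b (x + h) - PSC b x - h * PSC b' x) with
      (PSC b (x + h) + -1 * PSC b x + - h * PSC b' x) by ring.
    refine (is_series_ext _ _ _ _ S4). intros m. simpl. destruct m as [|m]; simpl em; unfold b'; ring. }
  assert (S6 : is_series (fun m => (C0 * Cmod h ^ 2) * (3/4) ^ m)%R ((C0 * Cmod h ^ 2) * / (1 - 3/4))%R).
  { apply ex_geom_C0. rewrite Rabs_pos_eq; lra. }
  pose proof (series_norm_le _ _ _ _ S5 S6) as Hfin.
  assert (Hfin' : (Cmod (PSC b (x + h) - PSC b x - h * PSC b' x) <= 4 * C0 * Cmod h ^ 2)%R).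
  { replace (4 * C0 * Cmod h ^ 2)%R with (C0 * Cmod h ^ 2 * / (1 - 3 / 4))%R by field.
    apply Hfin. intros m. rewrite Cmod_mult.
    assert (Hxh : (Cmod x + Cmod h <= 1)%R) by lra.
    pose proof (D_bound x h m Hxh). pose proof (Hb m). pose proof (INR_sq_le_3pow m).
    pose proof (Cmod_ge_0 (b m)).
    pose proof (Cmod_ge_0 (pow_n (x + h) m - pow_n x m - em x m * h)).
    assert (Hq : ((/4) ^ m * 3 ^ m = (3/4) ^ m)%R) by (rewrite <- Rpow_mult_distr; f_equal; field).
    assert (H4 : (0 <= (/4) ^ m)%R) by (apply pow_le; lra).
    set (Dm := (pow_n (x + h) m - pow_n x m - em x m * h)%C) in *.
    assert (Cmod (b m) * Cmod Dm <= C0 * (/4) ^ m * (INR m ^ 2 * Cmod h ^ 2))%R.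
    { apply Rmult_le_compat; auto. }
    assert (C0 * (/4) ^ m * (INR m ^ 2 * Cmod h ^ 2) <= C0 * (/4) ^ m * (3 ^ m * Cmod h ^ 2))%R.
    { apply Rmult_le_compat_l. nra. apply Rmult_le_compat_r. nra. auto. }
    nra. }
  replace (x + h - x) with h by ring.
  eapply Rle_trans. exact Hfin'.
  assert (Hep : (0 < eps)%R) by apply cond_pos.
  assert (Cmod h * (4 * C0 + 1) <= eps)%R.
  { apply (Rmult_le_compat_r (4 * C0 + 1)) in Hh2; [|lra]. 
    replace (eps / (4 * C0 + 1) * (4 * C0 + 1))%R with (pos eps) in Hh2 by (field; lra). lra. }
  nra.
Qed.

Fixpoint smax (f : nat -> R) (n : nat) : R :=
  match n with O => f O | S n' => Rmax (smax f n') (f (S n')) end.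

Lemma smax_ge f n k : (k <= n)%nat -> (f k <= smax f n)%R.
Proof.
  induction n; intros Hk.
  - assert (k = 0%nat) by lia. subst. simpl. lra.
  - simpl. destruct (Nat.eq_dec k (S n)) as [->|Hne].
    + apply Rmax_r.
    + eapply Rle_trans. apply IHn. lia. apply Rmax_l.
Qed.

Lemma step_bound (c : nat -> C) (eps mu nu Omega omega : C) :
  (forall m, natC (S m) * (natC m + nu) * c (S m) + eps * (natC m + omega) * c m +
     (match m with O => RtoC 0 | S m' => (mu * natC m' + Omega) * c m' end) = RtoC 0) ->
  exists N, forall k, (N <= S k)%nat ->
    (Cmod (c (S (S k))) <= / 5000 * (Cmod (c (S k)) + Cmod (c k)))%R.
Proof.
  intros Hrec.
  set (Ce := Cmod eps). set (Cw := Cmod omega). set (Cm := Cmod mu). set (CO := Cmod Omega). set (Cn := Cmod nu).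
  assert (Hpos : (0 <= Ce /\ 0 <= Cw /\ 0 <= Cm /\ 0 <= CO /\ 0 <= Cn)%R) by
    (unfold Ce, Cw, Cm, CO, Cn; repeat split; apply Cmod_ge_0).
  set (L := (Ce + Ce * Cw + Cm + CO + 1)%R).
  destruct (INR_unbounded (2 * Cn + 2 * L * 5000 + 1)) as [N HN].
  exists N. intros k Hk.
  set (m := S k).
  assert (HmN : (INR N <= INR m)%R) by (apply le_INR; unfold m; lia).
  specialize (Hrec m). unfold m in Hrec. fold m in Hrec.
  set (X := c (S m)) in *. set (Y := c m) in *. set (Z := c k) in *.
  assert (HX : natC (S m) * (natC m + nu) * X = - (eps * (natC m + omega) * Y + (mu * natC k + Omega) * Z)).
  { rewrite <- (Cplus_0_l (- _)). rewrite <- Hrec. ring. }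
  apply (f_equal Cmod) in HX.
  rewrite Cmod_opp, !Cmod_mult, Cmod_natC in HX.
  assert (Hnu : (INR m - Cn <= Cmod (natC m + nu))%R).
  { pose proof (Cmod_triangle (natC m + nu) (- nu)). rewrite Cmod_opp in H.
    replace (natC m + nu + - nu) with (natC m) in H by ring. rewrite Cmod_natC in H. unfold Cn. lra. }
  assert (Hrhs : (Cmod (eps * (natC m + omega) * Y + (mu * natC k + Omega) * Z) <=
     Ce * (INR m + Cw) * Cmod Y + (Cm * INR k + CO) * Cmod Z)%R).
  { eapply Rle_trans. apply Cmod_triangle. rewrite !Cmod_mult.
    apply Rplus_le_compat.
    - apply Rmult_le_compat_r. apply Cmod_ge_0. apply Rmult_le_compat_l. lra.
      eapply Rle_trans. apply Cmod_triangle. rewrite Cmod_natC. unfold Cw. lra.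
    - apply Rmult_le_compat_r. apply Cmod_ge_0.
      eapply Rle_trans. apply Cmod_triangle. rewrite Cmod_mult, Cmod_natC. unfold Cm, CO. lra. }
  assert (HL1 : (1 <= L)%R) by (unfold L; destruct Hpos as (?&?&?&?&?); pose proof (Rmult_le_pos Ce Cw H H0); lra).
  assert (Hm1 : (1 <= INR m)%R) by (destruct Hpos as (?&?&?&?&?); lra).
  assert (Hk' : (INR k + 1 = INR m)%R) by (unfold m; rewrite S_INR; lra).
  assert (HSm : INR (S m) = (INR m + 1)%R) by apply S_INR.
  pose proof (Cmod_ge_0 X). pose proof (Cmod_ge_0 Y). pose proof (Cmod_ge_0 Z).
  destruct Hpos as (Pe&Pw&Pm&PO&Pn).
  assert (HA : (Ce * (INR m + Cw) <= L * INR m)%R).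
  { unfold L. pose proof (Rmult_le_pos (Ce * Cw) (INR m - 1) (Rmult_le_pos _ _ Pe Pw) ltac:(lra)).
    pose proof (Rmult_le_pos (Cm + CO + 1) (INR m) ltac:(lra) ltac:(lra)). nra. }
  assert (HB : (Cm * INR k + CO <= L * INR m)%R).
  { unfold L. pose proof (Rmult_le_pos (Ce * Cw) (INR m) (Rmult_le_pos _ _ Pe Pw) ltac:(lra)).
    pose proof (Rmult_le_pos Ce (INR m) Pe ltac:(lra)).
    pose proof (Rmult_le_pos CO (INR m - 1) PO ltac:(lra)).
    pose proof (Rmult_le_pos Cm (INR m - INR k) Pm ltac:(lra)). nra. }
  assert (HL : (L * 5000 * 2 <= INR m + 1)%R) by lra.
  set (D := (INR (S m) * (INR m / 2))%R).
  assert (HD : (0 < D)%R) by (unfold D; rewrite HSm; nra).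
  assert (HDX : (D * Cmod X <= INR (S m) * Cmod (natC m + nu) * Cmod X)%R).
  { unfold D. apply Rmult_le_compat_r. lra. apply Rmult_le_compat_l. rewrite HSm; lra. lra. }
  assert (HLm : (L * INR m <= / 5000 * D)%R).
  { unfold D. rewrite HSm. nra. }
  assert (D * Cmod X <= D * (/ 5000 * (Cmod Y + Cmod Z)))%R.
  { nra. }
  apply Rmult_le_reg_l with D; lra.
Qed.

Lemma geom_bound (c : nat -> C) N :
  (forall k, (N <= S k)%nat -> (Cmod (c (S (S k))) <= / 5000 * (Cmod (c (S k)) + Cmod (c k)))%R) ->
  exists C0, forall m, (Cmod (c m) <= C0 * (/ 64) ^ m)%R.
Proof.
  intros Hs.
  set (Mx := smax (fun k => Cmod (c k)) (S N)).
  assert (HMx : (0 <= Mx)%R) by (eapply Rle_trans; [apply (Cmod_ge_0 (c 0%nat))|apply (smax_ge (fun k => Cmod (c k)) (S N) 0); lia]).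
  exists (Mx * 64 ^ (S N))%R.
  assert (Hsmall : forall m, (m <= S N)%nat -> (Cmod (c m) <= Mx * 64 ^ (S N) * (/ 64) ^ m)%R).
  { intros m Hm. eapply Rle_trans. apply (smax_ge (fun k => Cmod (c k)) (S N) m Hm). fold Mx.
    assert (E : (64 ^ S N * (/ 64) ^ m = 64 ^ (S N - m))%R).
    { replace (S N) with ((S N - m) + m)%nat at 1 by lia. rewrite pow_add.
      rewrite Rmult_assoc, <- Rpow_mult_distr. replace (64 * / 64)%R with 1%R by field. rewrite pow1. ring. }
    rewrite Rmult_assoc, E. assert (1 <= 64 ^ (S N - m))%R by (apply pow_R1_Rle; lra). nra. }
  assert (H : forall m, (Cmod (c m) <= Mx * 64 ^ (S N) * (/ 64) ^ m)%R /\
                        (Cmod (c (S m)) <= Mx * 64 ^ (S N) * (/ 64) ^ (S m))%R).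
  { induction m.
    - split; apply Hsmall; lia.
    - destruct IHm as [H1 H2]. split; [exact H2|].
      destruct (Compare_dec.le_lt_dec (S (S m)) (S N)) as [Hle|Hlt].
      + apply Hsmall; exact Hle.
      + eapply Rle_trans. apply Hs. lia.
        set (C0 := (Mx * 64 ^ S N)%R) in *.
        assert (0 <= C0)%R by (unfold C0; apply Rmult_le_pos; [lra|apply pow_le; lra]).
        assert (Hp : (0 <= (/64) ^ m)%R) by (apply pow_le; lra).
        change ((/ 64) ^ S m)%R with (/64 * (/64) ^ m)%R in *.
        change ((/ 64) ^ S (S m))%R with (/64 * (/64 * (/64) ^ m))%R.
        nra. }
  intros m. apply H.
Qed.

Lemma shift_bound (b : nat -> C) C0 r : (1 <= r)%R ->
  (forall m, (Cmod (b m) <= C0 * (/ (2 * r)) ^ m)%R) ->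
  forall m, (Cmod (natC (S m) * b (S m)) <= C0 * (/ r) ^ m)%R.
Proof.
  intros Hr Hb m.
  assert (HC0 : (0 <= C0)%R) by (specialize (Hb 0%nat); simpl in Hb; pose proof (Cmod_ge_0 (b 0%nat)); lra).
  rewrite Cmod_mult, Cmod_natC.
  pose proof (Hb (S m)). pose proof (INR_S_le_2pow m). pose proof (Cmod_ge_0 (b (S m))).
  change ((/ (2 * r)) ^ S m)%R with (/ (2 * r) * (/ (2 * r)) ^ m)%R in H.
  assert (E : (2 ^ m * (/ (2 * r)) ^ m = (/ r) ^ m)%R).
  { rewrite <- Rpow_mult_distr. f_equal. field. lra. }
  assert (Hp : (0 <= (/ (2 * r)) ^ m)%R) by (apply pow_le; apply Rlt_le, Rinv_0_lt_compat; lra).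
  assert (Hi : (0 < / (2 * r) <= 1)%R).
  { split. apply Rinv_0_lt_compat; lra. rewrite <- Rinv_1. apply Rinv_le_contravar; lra. }
  assert (INR (S m) * Cmod (b (S m)) <= 2 ^ m * (C0 * (/ (2 * r) * (/ (2 * r)) ^ m)))%R.
  { apply Rmult_le_compat; try lra. apply pos_INR. }
  assert (2 ^ m * (C0 * (/ (2 * r) * (/ (2 * r)) ^ m)) = C0 * / (2 * r) * (/ r) ^ m)%R.
  { rewrite <- E. ring. }
  assert (Hq : (0 <= (/ r) ^ m)%R) by (apply pow_le; apply Rlt_le, Rinv_0_lt_compat; lra).
  pose proof (Rmult_le_pos (C0 * (/ r) ^ m) (1 - / (2 * r)) (Rmult_le_pos _ _ HC0 Hq) ltac:(lra)).
  lra.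
Qed.

Lemma bound_weaken (b : nat -> C) C0 r : (4 <= r)%R ->
  (forall m, (Cmod (b m) <= C0 * (/ r) ^ m)%R) ->
  forall m, (Cmod (b m) <= C0 * (/ 4) ^ m)%R.
Proof.
  intros Hr Hb m.
  assert (HC0 : (0 <= C0)%R) by (specialize (Hb 0%nat); simpl in Hb; pose proof (Cmod_ge_0 (b 0%nat)); lra).
  eapply Rle_trans. apply Hb. apply Rmult_le_compat_l. lra. apply pow_incr. split.
  apply Rlt_le, Rinv_0_lt_compat; lra. apply Rinv_le_contravar; lra.
Qed.

Lemma pow_n_0C (x : C) : pow_n x 0 = RtoC 1.
Proof. reflexivity. Qed.

Theorem mainTheorem1 (mu eps nu Omega omega : C)
  (Hmu : mu <> RtoC 0) (Hnu : ~ nonpos_int nu)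
  (Hga : ~ nonpos_int ((1 + nu) / 2 - Omega / (2 * mu))) :
  let gam := (1 + nu) / 2 in
  let a := Omega / (2 * mu) in
  let K := CGamma (gam - a) / CGamma gam in
  exists r : R, (0 < r)%R /\
  exists y y1 y2 : C -> C,
    forall x : C, (Cmod x < r)%R ->
      is_series (fun m => K * QWcoef omega gam a eps mu m * pow_n x m) (y x) /\
      is_derive y x (y1 x) /\
      is_derive y1 x (y2 x) /\
      x * y2 x + (mu * x * x + eps * x + nu) * y1 x
        + (Omega * x + eps * omega) * y x = RtoC 0.
Proof.
  intros gam a K.
  assert (Hg : forall k, natC k + 2 * gam - 1 <> 0).
  { intros k E. apply Hnu. exists k. unfold gam in E.
    assert (E2 : nu = natC k + 2 * ((1 + nu) / 2) - 1 - natC k) by field.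
    rewrite E in E2. rewrite E2. ring. }
  assert (Hnu' : nu = 2 * gam - 1) by (unfold gam; field).
  assert (HO : Omega = 2 * mu * a) by (unfold a; field; exact Hmu).
  set (c := fun m => K * QWcoef omega gam a eps mu m).
  assert (Hrec : forall m, natC (S m) * (natC m + nu) * c (S m) + eps * (natC m + omega) * c m +
     (match m with O => RtoC 0 | S m' => (mu * natC m' + Omega) * c m' end) = RtoC 0).
  { intros m. pose proof (QW_rec omega gam a eps mu nu Omega m Hg Hnu' HO) as H.
    unfold c. destruct m as [|m].
    - transitivity (K * (natC 1 * (natC 0 + nu) * QWcoef omega gam a eps mu 1 +
        eps * (natC 0 + omega) * QWcoef omega gam a eps mu 0 + RtoC 0)); [ring|].
      rewrite H. ring.
    - transitivity (K * (natC (S (S m)) * (natC (S m) + nu) * QWcoef omega gam a eps mu (S (S m)) +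
        eps * (natC (S m) + omega) * QWcoef omega gam a eps mu (S m) +
        (mu * natC m + Omega) * QWcoef omega gam a eps mu m)); [ring|].
      rewrite H. ring. }
  destruct (step_bound c eps mu nu Omega omega Hrec) as [N HN].
  destruct (geom_bound c N HN) as [C0 Hc64].
  set (b1 := fun m => natC (S m) * c (S m)).
  set (b2 := fun m => natC (S m) * b1 (S m)).
  assert (Hb1_32 : forall m, (Cmod (b1 m) <= C0 * (/ 32) ^ m)%R).
  { apply (shift_bound c C0 32). lra. intros m. replace (2 * 32)%R with 64%R by ring. apply Hc64. }
  assert (Hb2_16 : forall m, (Cmod (b2 m) <= C0 * (/ 16) ^ m)%R).
  { apply (shift_bound b1 C0 16). lra. intros m. replace (2 * 16)%R with 32%R by ring. apply Hb1_32. }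
  assert (Hc4 := bound_weaken c C0 64 ltac:(lra) Hc64).
  assert (Hb14 := bound_weaken b1 C0 32 ltac:(lra) Hb1_32).
  assert (Hb24 := bound_weaken b2 C0 16 ltac:(lra) Hb2_16).
  exists (/2)%R. split. lra.
  exists (PSC c), (PSC b1), (PSC b2).
  intros x Hx.
  assert (Hx1 : (Cmod x <= 1)%R) by lra.
  pose proof (PSC_conv c C0 Hc4 x Hx1) as Sy.
  pose proof (PSC_conv b1 C0 Hb14 x Hx1) as Sy1.
  pose proof (PSC_conv b2 C0 Hb24 x Hx1) as Sy2.
  split; [exact Sy|].
  split; [exact (PSC_derive c C0 Hc4 x Hx)|].
  split; [exact (PSC_derive b1 C0 Hb14 x Hx)|].
  set (Y := PSC c x) in *. set (Y1 := PSC b1 x) in *. set (Y2 := PSC b2 x) in *.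
  pose proof (is_series_shift _ _ (is_series_Cmult x _ _ Sy2)) as A1.
  pose proof (is_series_shift _ _ (is_series_Cmult x _ _ Sy1)) as V1.
  pose proof (is_series_Cmult mu _ _ (is_series_shift _ _ (is_series_Cmult x _ _ V1))) as A2.
  pose proof (is_series_Cmult eps _ _ V1) as A3.
  pose proof (is_series_Cmult nu _ _ Sy1) as A4.
  pose proof (is_series_Cmult Omega _ _ (is_series_shift _ _ (is_series_Cmult x _ _ Sy))) as A5.
  pose proof (is_series_Cmult (eps * omega) _ _ Sy) as A6.
  pose proof (is_series_Cplus _ _ _ _ (is_series_Cplus _ _ _ _ (is_series_Cplus _ _ _ _
     (is_series_Cplus _ _ _ _ (is_series_Cplus _ _ _ _ A1 A2) A3) A4) A5) A6) as Tot.
  replace (x * Y2 + (mu * x * x + eps * x + nu) * Y1 + (Omega * x + eps * omega) * Y)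
    with (x * Y2 + mu * (x * (x * Y1)) + eps * (x * Y1) + nu * Y1 + Omega * (x * Y) + eps * omega * Y) by ring.
  apply (is_series_C_unique _ _ _ Tot).
  refine (is_series_ext _ _ _ _ is_series_C0).
  intros m. cbv beta. symmetry. match goal with |- ?A = ?B => change (@eq C A B) end.
  pose proof (Hrec m) as Hm.
  destruct m as [|[|k]]; unfold b2, b1; rewrite ?pow_n_SC.
  - transitivity ((natC 1 * (natC 0 + nu) * c 1%nat + eps * (natC 0 + omega) * c 0%nat + RtoC 0) * pow_n x 0).
    + natC_norm. simpl pow_n. ring.
    + rewrite Hm. ring.
  - match type of Hm with ?E = _ => transitivity (E * pow_n x 1) end.
    + natC_norm. rewrite ?pow_n_SC, ?pow_n_0C. ring.
    + rewrite Hm. ring.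
  - match type of Hm with ?E = _ => transitivity (E * pow_n x (S (S k))) end.
    + natC_norm. rewrite ?pow_n_SC. ring.
    + rewrite Hm. ring.
Qed.
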